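(* Let $\mathcal{W}=(A,\to,\mathbb{S},\mathsf{f}_{\mathtt{NF}},\mathsf{Aggr})$ be a wARS. Then $\mathcal{W}$ is bounded if all of the following hold: (1) the sARS $(A,\to)$ is terminating, finitely non-deterministic, and finitely branching; (2) the semiring $\mathbb{S}$ has the extremal property; (3) $\mathsf{f}_{\mathtt{NF}}(a)\neq\top$ for all $a\in\mathtt{NF}_\to$; and (4) all aggregators $\mathsf{Aggr}_{a\to B}$ are finite aggregators that do not use $\top$ as a constant.
   Context: A semiring $\mathbb{S}=(S,\oplus,\odot,\mathbf{0},\mathbf{1})$: $(S,\oplus,\mathbf{0})$ commutative monoid, $(S,\odot,\mathbf{1})$ monoid, $\odot$ distributes over $\oplus$, $\mathbf{0}$ annihilator. Natural order: $s\preccurlyeq t$ iff $s\oplus u=t$ for some $u$. A complete lattice semiring is one where $\preccurlyeq$ is antisymmetric and every subset $T\subseteq S$ has a least upper bound $\bigsqcup T$; $\top=\bigsqcup S$. Infinite sums/products of a sequence are the suprema of the finite partial sums/products. A function $f:S^n\to S$ ($n\in\mathbb{N}$) has the extremal property if $f(e_1,\dots,e_n)\neq\top$ whenever $e_1,\dots,e_n\in S\setminus\{\top\}$; the semiring has the extremal property if $\oplus$ and $\odot$ do. $\mathrm{Seq}(X)$: non-empty finite or infinite sequences over $X$. An sARS is $(A,\to)$ with $\to\subseteq A\times\mathrm{Seq}(A)$; $\mathtt{NF}_\to$ is the set of $a$ with no $B$ such that $a\to B$. It is finitely non-deterministic if each $a$ has only finitely many $B$ with $a\to B$, and finitely branching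 if $B$ is finite whenever $a\to B$. An $(A,\to)$-reduction tree (RT) is a labeled ordered tree (possibly of infinite depth) whose nodes $v$ carry labels $a_v\in A$ and whose ordered child sequence $vE$ is either empty or satisfies $a_v\to[a_w\mid w\in vE]$; $(A,\to)$ is terminating if all RTs have finite depth. Aggregators: smallest set containing constants $s\in S$, variables $v_1,v_2,\dots$, and $\bigoplus F$, $\bigodot F$ for non-empty finite or infinite sequences $F$ of aggregators; an aggregator is finite if it is constructed only from finite sequences $F$. Aggregators induce functions by substituting the $i$-th argument for $v_i$. A wARS $(A,\to,\mathbb{S},\mathsf{f}_{\mathtt{NF}},\mathsf{Aggr})$ consists of an sARS, a complete lattice semiring $\mathbb{S}$, a map $\mathsf{f}_{\mathtt{NF}}:\mathtt{NF}_\to\to S$, and for each $a\to B$ an aggregator $\mathsf{Aggr}_{a\to B}$ with variable indices $\le|B|$, viewed as a function $S^{|B|}\to S$. Weight of a finite-depth RT $\mathfrak{T}$ at node $v$: $\mathsf{f}_{\mathtt{NF}}(a_v)$ if $a_v\in\mathtt{NF}_\to$; $\mathbf{0}$ if $v$ is a leaf with $a_v\notin\mathtt{NF}_\to$; $\mathsf{Aggr}_{a_v\to B}[$weights of the children in order$]$ with $B=[a_w\mid w\in vE]$ otherwise; $[\![\mathfrak{T}]\!]$ is the weight at the root. $[\![a]\!]=\bigsqcup\{[\![\mathfrak{T}]\!]\mid\mathfrak{T}$ a finite-depth RT with root labeled $a\}$. The wARS is bounded if $[\![a]\!]\neq\top$ for all $a\in A$. *)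

(* Defs.v *)
From Stdlib Require Import List Arith ClassicalEpsilon.
Import ListNotations.
Set Implicit Arguments.

Record csemiring := CSemiring {
  car :> Type;
  sadd : car -> car -> car;
  smul : car -> car -> car;
  szero : car;
  sone : car;
  sadd_assoc : forall x y z, sadd x (sadd y z) = sadd (sadd x y) z;
  sadd_comm : forall x y, sadd x y = sadd y x;
  sadd_0l : forall x, sadd szero x = x;
  smul_assoc : forall x y z, smul x (smul y z) = smul (smul x y) z;
  smul_1l : forall x, smul sone x = x;
  smul_1r : forall x, smul x sone = x;
  smul_addl : forall x y z, smul (sadd x y) z = sadd (smul x z) (smul y z);
  smul_addr : forall x y z, smul x (sadd y z) = sadd (smul x y) (smul x z);
  smul_0l : forall x, smul szero x = szero;
  smul_0r : forall x, smul x szero = szero;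
  (* natural order s <= t iff s + u = t for some u; antisymmetric *)
  sle_antisym : forall x y, (exists u, sadd x u = y) -> (exists u, sadd y u = x) -> x = y;
  ssup : (car -> Prop) -> car;
  ssup_ub : forall (T : car -> Prop) x, T x -> exists u, sadd x u = ssup T;
  ssup_least : forall (T : car -> Prop) y,
      (forall x, T x -> exists u, sadd x u = y) -> exists u, sadd (ssup T) u = y
}.

Definition sle (K : csemiring) (x y : K) : Prop := exists u, sadd K x u = y.
Definition stop (K : csemiring) : K := ssup K (fun _ => True).

Definition extremal (K : csemiring) : Prop :=
  (forall x y : K, x <> stop K -> y <> stop K -> sadd K x y <> stop K) /\
  (forall x y : K, x <> stop K -> y <> stop K -> smul K x y <> stop K).

Inductive Seq (X : Type) : Type :=
| SFin : X -> list X -> Seq X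
| SInf : (nat -> X) -> Seq X.
Arguments SFin {X}. Arguments SInf {X}.

Definition seq_len X (B : Seq X) : option nat :=
  match B with SFin _ l => Some (S (length l)) | SInf _ => None end.

Definition is_finite_seq X (B : Seq X) : Prop :=
  match B with SFin _ _ => True | SInf _ => False end.

(* AVar i stands for the variable v_(i+1) *)
Inductive aggr (S : Type) : Type :=
| ACst : S -> aggr S
| AVar : nat -> aggr S
| ASum : Seq (aggr S) -> aggr S
| AProd : Seq (aggr S) -> aggr S.
Arguments ACst {S}. Arguments AVar {S}. Arguments ASum {S}. Arguments AProd {S}.

Definition fsum (K : csemiring) (x : K) (l : list K) : K := fold_left (sadd K) l x.
Definition fprod (K : csemiring) (x : K) (l : list K) : K := fold_left (smul K) l x.

Definition isum (K : csemiring) (f : nat -> K) : K :=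
  ssup K (fun s => exists n, s = fsum K (f 0) (map (fun j => f (S j)) (seq 0 n))).
Definition iprod (K : csemiring) (f : nat -> K) : K :=
  ssup K (fun s => exists n, s = fprod K (f 0) (map (fun j => f (S j)) (seq 0 n))).

Fixpoint aeval (K : csemiring) (rho : nat -> K) (g : aggr K) : K :=
  let fix evl (l : list (aggr K)) : list K :=
      match l with [] => [] | x :: l' => aeval K rho x :: evl l' end in
  match g with
  | ACst s => s
  | AVar i => rho i
  | ASum (SFin x l) => fsum K (aeval K rho x) (evl l)
  | ASum (SInf f) => isum K (fun n => aeval K rho (f n))
  | AProd (SFin x l) => fprod K (aeval K rho x) (evl l)
  | AProd (SInf f) => iprod K (fun n => aeval K rho (f n))
  end.

Fixpoint vars_ok (S : Type) (b : option nat) (g : aggr S) : Prop :=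
  let fix alll (l : list (aggr S)) : Prop :=
      match l with [] => True | x :: l' => vars_ok b x /\ alll l' end in
  match g with
  | ACst _ => True
  | AVar i => match b with Some n => i < n | None => True end
  | ASum (SFin x l) | AProd (SFin x l) => vars_ok b x /\ alll l
  | ASum (SInf f) | AProd (SInf f) => forall n, vars_ok b (f n)
  end.

Fixpoint finite_aggr (S : Type) (g : aggr S) : Prop :=
  let fix alll (l : list (aggr S)) : Prop :=
      match l with [] => True | x :: l' => finite_aggr x /\ alll l' end in
  match g with
  | ACst _ | AVar _ => True
  | ASum (SFin x l) | AProd (SFin x l) => finite_aggr x /\ alll l
  | ASum (SInf _) | AProd (SInf _) => False
  end.

Fixpoint avoids_const (S : Type) (c : S) (g : aggr S) : Prop :=
  let fix alll (l : list (aggr S)) : Prop :=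
      match l with [] => True | x :: l' => avoids_const c x /\ alll l' end in
  match g with
  | ACst s => s <> c
  | AVar _ => True
  | ASum (SFin x l) | AProd (SFin x l) => avoids_const c x /\ alll l
  | ASum (SInf f) | AProd (SInf f) => forall n, avoids_const c (f n)
  end.

Section SARS.
Variable A : Type.
Variable step : A -> Seq A -> Prop.

Definition NF (a : A) : Prop := ~ exists B, step a B.

Definition fin_nondet : Prop :=
  forall a, exists L : list (Seq A), forall B, step a B -> In B L.

Definition fin_branching : Prop := forall a B, step a B -> is_finite_seq B.

(* Reduction trees, nodes = positions (lists of child indices, [] = root).
   dom = set of nodes, lab = labels, nch v = number of children of v
   (Some k: k children, None: infinitely many). *)
Definition lt_opt (i : nat) (o : option nat) : Prop :=
  match o with Some k => i < k | None => True end.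

Definition child_seq X (o : option nat) (f : nat -> X) : option (Seq X) :=
  match o with
  | Some 0 => None
  | Some (S k) => Some (SFin (f 0) (map (fun j => f (S j)) (seq 0 k)))
  | None => Some (SInf f)
  end.

Definition is_RT (dom : list nat -> Prop) (lab : list nat -> A)
    (nch : list nat -> option nat) : Prop :=
  dom [] /\
  (forall v i, dom (v ++ [i]) -> dom v) /\
  (forall v i, dom v -> (dom (v ++ [i]) <-> lt_opt i (nch v))) /\
  (forall v, dom v ->
     match child_seq (nch v) (fun i => lab (v ++ [i])) with
     | None => True
     | Some B => step (lab v) B
     end).

Definition depth_le (dom : list nat -> Prop) (n : nat) : Prop :=
  forall v, dom v -> length v <= n.

Definition terminating : Prop :=
  forall dom lab nch, is_RT dom lab nch -> exists n, depth_le dom n.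

End SARS.

Section WARS.
Variable K : csemiring.
Variable A : Type.
Variable step : A -> Seq A -> Prop.
Variable fNF : {a : A | NF step a} -> K.
Variable Aggr : A -> Seq A -> aggr K.

Definition leaf_val (a : A) : K :=
  match excluded_middle_informative (NF step a) with
  | left h => fNF (exist _ a h)
  | right _ => szero K
  end.

(* weight at node v, computed with fuel (fuel >= remaining height suffices) *)
Fixpoint wt (lab : list nat -> A) (nch : list nat -> option nat)
    (fuel : nat) (v : list nat) : K :=
  match fuel with
  | 0 => leaf_val (lab v)
  | S k =>
      match child_seq (nch v) (fun i => lab (v ++ [i])) with
      | None => leaf_val (lab v)
      | Some B => aeval K (fun i => wt lab nch k (v ++ [i])) (Aggr (lab v) B)
      end
  end.

Definition sem (a : A) : K :=
  ssup K (fun s => exists dom lab nch n,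
     is_RT step dom lab nch /\ lab [] = a /\ depth_le dom n /\ s = wt lab nch n []).

Definition bounded : Prop := forall a, sem a <> stop K.

End WARS.

(* Main.v *)
Require Import Defs.
From Stdlib Require Import List Arith Lia ClassicalEpsilon Classical.
Import ListNotations.

Lemma sle_refl (K : csemiring) (x : K) : sle K x x.
Proof. exists (szero K). rewrite sadd_comm. apply sadd_0l. Qed.

Lemma sle_trans (K : csemiring) (x y z : K) : sle K x y -> sle K y z -> sle K x z.
Proof. intros [u Hu] [w Hw]. exists (sadd K u w). rewrite sadd_assoc, Hu; exact Hw. Qed.

Lemma sle_addr (K : csemiring) (x y : K) : sle K y (sadd K x y).
Proof. exists x. apply sadd_comm. Qed.

Lemma sle_addl (K : csemiring) (x y : K) : sle K x (sadd K x y).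
Proof. exists y. reflexivity. Qed.

Lemma sle_0 (K : csemiring) (x : K) : sle K (szero K) x.
Proof. exists x. apply sadd_0l. Qed.

Lemma sle_add (K : csemiring) (x y x' y' : K) : sle K x y -> sle K x' y' ->
  sle K (sadd K x x') (sadd K y y').
Proof.
  intros [u Hu] [w Hw]. subst. exists (sadd K u w).
  rewrite !sadd_assoc. f_equal. rewrite <- !sadd_assoc. f_equal. apply sadd_comm.
Qed.

Lemma sle_mul (K : csemiring) (x y x' y' : K) : sle K x y -> sle K x' y' ->
  sle K (smul K x x') (smul K y y').
Proof.
  intros [u Hu] [w Hw]. subst.
  exists (sadd K (smul K x w) (smul K u (sadd K x' w))).
  rewrite smul_addl, !smul_addr. rewrite !sadd_assoc. reflexivity.
Qed.

Lemma sle_top (K : csemiring) (x : K) : sle K x (stop K).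
Proof. apply ssup_ub. exact I. Qed.

Lemma le_top_eq (K : csemiring) (x : K) : sle K (stop K) x -> x = stop K.
Proof. intros H. apply sle_antisym. apply sle_top. exact H. Qed.

Lemma fold_mono (K : csemiring) (op : K -> K -> K)
  (Hop : forall x y x' y', sle K x y -> sle K x' y' -> sle K (op x x') (op y y'))
  l l' x x' : Forall2 (sle K) l l' -> sle K x x' -> sle K (fold_left op l x) (fold_left op l' x').
Proof.
  intros H. revert x x'. induction H; intros; simpl; auto.
Qed.

Lemma fold_ntop (K : csemiring) (op : K -> K -> K)
  (Hop : forall x y, x <> stop K -> y <> stop K -> op x y <> stop K)
  l x : Forall (fun y => y <> stop K) l -> x <> stop K -> fold_left op l x <> stop K.
Proof.
  intros H. revert x. induction H; intros; simpl; auto.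
Qed.

Section AI.
Variable S : Type.
Variable P : aggr S -> Prop.
Hypothesis HC : forall s, P (ACst s).
Hypothesis HV : forall i, P (AVar i).
Hypothesis HSF : forall x l, P x -> Forall P l -> P (ASum (SFin x l)).
Hypothesis HSI : forall f, (forall n, P (f n)) -> P (ASum (SInf f)).
Hypothesis HPF : forall x l, P x -> Forall P l -> P (AProd (SFin x l)).
Hypothesis HPI : forall f, (forall n, P (f n)) -> P (AProd (SInf f)).
Fixpoint aggr_ind' (g : aggr S) : P g :=
  match g with
  | ACst s => HC s
  | AVar i => HV i
  | ASum (SFin x l) => HSF x l (aggr_ind' x)
      ((fix go (l : list (aggr S)) : Forall P l :=
          match l with [] => Forall_nil _ | y :: l' => Forall_cons _ (aggr_ind' y) (go l') end) l)
  | ASum (SInf f) => HSI f (fun n => aggr_ind' (f n))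
  | AProd (SFin x l) => HPF x l (aggr_ind' x)
      ((fix go (l : list (aggr S)) : Forall P l :=
          match l with [] => Forall_nil _ | y :: l' => Forall_cons _ (aggr_ind' y) (go l') end) l)
  | AProd (SInf f) => HPI f (fun n => aggr_ind' (f n))
  end.
End AI.

Lemma aeval_SF (K : csemiring) rho (x : aggr K) l :
  aeval K rho (ASum (SFin x l)) = fsum K (aeval K rho x) (map (aeval K rho) l).
Proof. simpl. f_equal; try (induction l; simpl; congruence). Qed.
Lemma aeval_PF (K : csemiring) rho (x : aggr K) l :
  aeval K rho (AProd (SFin x l)) = fprod K (aeval K rho x) (map (aeval K rho) l).
Proof. simpl. f_equal; try (induction l; simpl; congruence). Qed.

Lemma fin_SF (S : Type) (x : aggr S) l :
  finite_aggr (ASum (SFin x l)) -> finite_aggr x /\ Forall (@finite_aggr S) l.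
Proof. simpl. intros [H1 H2]. split; auto. induction l; simpl in *; intuition. Qed.
Lemma fin_PF (S : Type) (x : aggr S) l :
  finite_aggr (AProd (SFin x l)) -> finite_aggr x /\ Forall (@finite_aggr S) l.
Proof. simpl. intros [H1 H2]. split; auto. induction l; simpl in *; intuition. Qed.
Lemma vo_SF (S : Type) b (x : aggr S) l :
  vars_ok b (ASum (SFin x l)) -> vars_ok b x /\ Forall (vars_ok b) l.
Proof. simpl. intros [H1 H2]. split; auto. induction l; simpl in *; intuition. Qed.
Lemma vo_PF (S : Type) b (x : aggr S) l :
  vars_ok b (AProd (SFin x l)) -> vars_ok b x /\ Forall (vars_ok b) l.
Proof. simpl. intros [H1 H2]. split; auto. induction l; simpl in *; intuition. Qed.
Lemma av_SF (S : Type) c (x : aggr S) l :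
  avoids_const c (ASum (SFin x l)) -> avoids_const c x /\ Forall (avoids_const c) l.
Proof. simpl. intros [H1 H2]. split; auto. induction l; simpl in *; intuition. Qed.
Lemma av_PF (S : Type) c (x : aggr S) l :
  avoids_const c (AProd (SFin x l)) -> avoids_const c x /\ Forall (avoids_const c) l.
Proof. simpl. intros [H1 H2]. split; auto. induction l; simpl in *; intuition. Qed.

Lemma forall2_map (K : csemiring) (f g : aggr K -> K) l :
  Forall (fun y => sle K (f y) (g y)) l -> Forall2 (sle K) (map f l) (map g l).
Proof. induction 1; simpl; constructor; auto. Qed.

Lemma aeval_mono (K : csemiring) n rho rho' (g : aggr K) :
  (forall i, i < n -> sle K (rho i) (rho' i)) ->
  finite_aggr g -> vars_ok (Some n) g -> sle K (aeval K rho g) (aeval K rho' g).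
Proof.
  intros Hr. induction g using aggr_ind'; intros Hf Hv.
  - apply sle_refl.
  - simpl in *. auto.
  - apply fin_SF in Hf as [Hf1 Hf2]. apply vo_SF in Hv as [Hv1 Hv2].
    rewrite !aeval_SF. unfold fsum. apply fold_mono; auto. apply sle_add.
    apply forall2_map. induction H; constructor; inversion Hf2; inversion Hv2; auto.
  - simpl in Hf. contradiction.
  - apply fin_PF in Hf as [Hf1 Hf2]. apply vo_PF in Hv as [Hv1 Hv2].
    rewrite !aeval_PF. unfold fprod. apply fold_mono; auto. apply sle_mul.
    apply forall2_map. induction H; constructor; inversion Hf2; inversion Hv2; auto.
  - simpl in Hf. contradiction.
Qed.

Lemma aeval_ntop (K : csemiring) (Hext : extremal K) rho (g : aggr K) :
  (forall i, rho i <> stop K) ->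
  finite_aggr g -> avoids_const (stop K) g -> aeval K rho g <> stop K.
Proof.
  intros Hr. destruct Hext as [Ha Hm]. induction g using aggr_ind'; intros Hf Hv.
  - simpl in *. auto.
  - simpl in *. auto.
  - apply fin_SF in Hf as [Hf1 Hf2]. apply av_SF in Hv as [Hv1 Hv2].
    rewrite !aeval_SF. unfold fsum. apply fold_ntop; auto.
    induction H; constructor; inversion Hf2; inversion Hv2; auto.
  - simpl in Hf. contradiction.
  - apply fin_PF in Hf as [Hf1 Hf2]. apply av_PF in Hv as [Hv1 Hv2].
    rewrite !aeval_PF. unfold fprod. apply fold_ntop; auto.
    induction H; constructor; inversion Hf2; inversion Hv2; auto.
  - simpl in Hf. contradiction.
Qed.

Definition snth {A} (B : Seq A) (i : nat) : A :=
  match B with SFin x l => nth i (x :: l) x | SInf f => f i end.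
Definition slen {A} (B : Seq A) : nat :=
  match B with SFin _ l => S (length l) | SInf _ => 0 end.

Definition Rc {A} (step : A -> Seq A -> Prop) (b a : A) : Prop :=
  exists x l, step a (SFin x l) /\ In b (x :: l).

Lemma map_nth_seq_id {A} (x : A) l : map (fun j => nth j l x) (seq 0 (length l)) = l.
Proof.
  induction l; simpl; auto. f_equal. rewrite <- seq_shift, map_map. simpl. exact IHl.
Qed.

Lemma wf_Rc {A} (step : A -> Seq A -> Prop) :
  terminating step -> well_founded (Rc step).
Proof.
  intros Hterm a0. apply NNPP. intros Hna0.
  set (NA := fun a => ~ Acc (Rc step) a).
  assert (Hnext : forall a, NA a -> exists x l, step a (SFin x l) /\ exists b, In b (x :: l) /\ NA b).
  { intros a Ha. apply NNPP. intros Hn. apply Ha. constructor. intros b [x [l [Hs Hi]]].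
    apply NNPP. intros Hb. apply Hn. exists x, l. split; auto. exists b; auto. }
  set (Bof := fun a => epsilon (inhabits (SFin a [])) (fun B => exists x l, B = SFin x l /\ step a (SFin x l) /\ exists b, In b (x :: l) /\ NA b)).
  assert (HB : forall a, NA a -> exists x l, Bof a = SFin x l /\ step a (SFin x l) /\ exists b, In b (x :: l) /\ NA b).
  { intros a Ha. unfold Bof. apply epsilon_spec.
    destruct (Hnext a Ha) as [x [l [H1 H2]]]. exists (SFin x l), x, l; auto. }
  set (nnum := fun a => if excluded_middle_informative (NA a) then slen (Bof a) else 0).
  set (labr := fix labr (r : list nat) : A := match r with [] => a0 | i :: r' => snth (Bof (labr r')) i end).
  set (domr := fix domr (r : list nat) : Prop := match r with [] => True | i :: r' => domr r' /\ i < nnum (labr r') end).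
  assert (HRT : is_RT step (fun v => domr (rev v)) (fun v => labr (rev v)) (fun v => Some (nnum (labr (rev v))))).
  { split; [|split; [|split]].
    - simpl. exact I.
    - intros v i. rewrite rev_app_distr. simpl. tauto.
    - intros v i Hv. rewrite rev_app_distr. simpl. tauto.
    - intros v Hv. unfold nnum. destruct (excluded_middle_informative (NA (labr (rev v)))) as [Hn|Hn].
      + destruct (HB _ Hn) as [x [l [E [Hs _]]]]. rewrite E. simpl.
        rewrite rev_app_distr. simpl. rewrite E. simpl.
        replace (map (fun j => labr (rev (v ++ [S j]))) (seq 0 (length l))) with l. exact Hs.
        rewrite <- (map_nth_seq_id x l) at 1. apply map_ext. intros j.
        rewrite rev_app_distr. simpl. rewrite E. reflexivity.
      + exact I. }
  destruct (Hterm _ _ _ HRT) as [n Hn].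
  assert (Hex : forall m, exists r, domr r /\ length r = m /\ NA (labr r)).
  { induction m.
    - exists []. simpl. auto.
    - destruct IHm as [r [H1 [H2 H3]]].
      destruct (HB _ H3) as [x [l [E [_ [b [Hb Hnb]]]]]].
      destruct (In_nth _ _ x Hb) as [i [Hi Hni]].
      exists (i :: r). simpl. split; [split|split]; auto.
      + unfold nnum. destruct (excluded_middle_informative (NA (labr r))); [|contradiction].
        rewrite E. exact Hi.
      + rewrite E. simpl. simpl in Hni. rewrite Hni. exact Hnb. }
  destruct (Hex (S n)) as [r [H1 [H2 _]]].
  pose proof (Hn (rev r)) as Hn2. cbv beta in Hn2. rewrite rev_involutive, length_rev in Hn2. specialize (Hn2 H1). lia.
Qed.

Lemma fold_base (K : csemiring) (b : K) l : sle K b (fold_right (sadd K) b l).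
Proof. induction l; simpl. apply sle_refl. eapply sle_trans; [exact IHl|apply sle_addr]. Qed.
Lemma fold_elem (K : csemiring) (b t : K) l : In t l -> sle K t (fold_right (sadd K) b l).
Proof. induction l; simpl; [contradiction|]. intros [E|H]. subst; apply sle_addl.
  eapply sle_trans; [exact (IHl H)|apply sle_addr]. Qed.
Lemma fold_r_ntop (K : csemiring) (Hext : extremal K) (b : K) l :
  b <> stop K -> Forall (fun y => y <> stop K) l -> fold_right (sadd K) b l <> stop K.
Proof. intros Hb H. induction H; simpl; auto. apply Hext; auto. Qed.

Lemma nth_childseq {A} (h : nat -> A) k i : i < S k ->
  snth (SFin (h 0) (map (fun j => h (S j)) (seq 0 k))) i = h i.
Proof.
  intros Hi. simpl. destruct i; auto.
  rewrite nth_indep with (d' := h (S 0)) by (rewrite length_map, length_seq; lia).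
  rewrite map_nth with (f := fun j => h (S j)) (d := 0). rewrite seq_nth by lia. reflexivity.
Qed.

Theorem theorem29 (K : csemiring) (A : Type) (step : A -> Seq A -> Prop)
    (fNF : {a : A | NF step a} -> K) (Aggr : A -> Seq A -> aggr K)
    (* wARS well-formedness: variable indices of Aggr_{a -> B} are <= |B| *)
    (Hwars : forall a B, step a B -> vars_ok (seq_len B) (Aggr a B))
    (* (1) *)
    (Hterm : terminating step) (Hfnd : fin_nondet step) (Hfb : fin_branching step)
    (* (2) *)
    (Hext : extremal K)
    (* (3) *)
    (Hnf : forall a : {a : A | NF step a}, fNF a <> stop K)
    (* (4) *)
    (Hagg : forall a B, step a B ->
        finite_aggr (Aggr a B) /\ avoids_const (stop K) (Aggr a B)) :
  @bounded K A step fNF Aggr.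
Proof.
  intros a0.
  pose proof (wf_Rc step Hterm) as Hwf.
  assert (Hz : szero K <> stop K).
  { intros Hz. assert (Hall : forall x : K, x = stop K).
    { intros x. apply sle_antisym. apply sle_top. rewrite <- Hz. apply sle_0. }
    induction a0 as [a IH] using (well_founded_ind Hwf).
    destruct (classic (NF step a)) as [Hn|Hn].
    - apply (Hnf (exist _ a Hn)). apply Hall.
    - apply NNPP in Hn. destruct Hn as [B HB]. pose proof (Hfb _ _ HB) as Hf.
      destruct B as [x l|f]; [|contradiction]. apply (IH x). exists x, l. simpl; auto. }
  assert (Hleaf : forall a, leaf_val K fNF a <> stop K).
  { intros a. unfold leaf_val. destruct (excluded_middle_informative (NF step a)); auto. }
  set (Q := fun (b : A) (m : K) => m <> stop K /\ forall dom lab nch v k,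
        is_RT step dom lab nch -> dom v -> lab v = b -> sle K (wt K fNF Aggr lab nch k v) m).
  set (f := fun b => epsilon (inhabits (szero K)) (Q b)).
  assert (HP : forall a, Q a (f a)).
  { intros a. induction a as [a IH] using (well_founded_ind Hwf).
    unfold f. apply epsilon_spec.
    destruct (Hfnd a) as [L HL].
    set (term := fun B => if excluded_middle_informative (step a B)
                 then aeval K (fun i => f (snth B i)) (Aggr a B) else szero K).
    exists (fold_right (sadd K) (leaf_val K fNF a) (map term L)).
    assert (Hsub : forall B i, step a B -> Rc step (snth B i) a).
    { intros B i HB. pose proof (Hfb _ _ HB) as Hf. destruct B as [x l|g]; [|contradiction].
      exists x, l. split; auto. unfold snth. destruct (Nat.lt_ge_cases i (S (length l))).
      apply nth_In. simpl. exact H. rewrite nth_overflow by (simpl; lia). left; auto. }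
    split.
    - apply fold_r_ntop; auto. apply Forall_forall. intros t Ht.
      apply in_map_iff in Ht as [B [E _]]. subst t. unfold term.
      destruct (excluded_middle_informative (step a B)) as [HB|]; auto.
      apply aeval_ntop; auto; try apply (Hagg _ _ HB).
      intros i. apply (IH _ (Hsub B i HB)).
    - intros dom lab nch v k HRT Hv Hl.
      destruct HRT as [H0 [H1 [H2 H3]]].
      assert (Hbase : sle K (leaf_val K fNF (lab v)) (fold_right (sadd K) (leaf_val K fNF a) (map term L))).
      { rewrite Hl. apply fold_base. }
      destruct k as [|k]; simpl; auto.
      pose proof (H3 v Hv) as Hs.
      destruct (nch v) as [[|n]|] eqn:En; simpl in *; auto.
      + rewrite Hl in Hs.
        set (B := SFin (lab (v ++ [0])) (map (fun j => lab (v ++ [S j])) (seq 0 n))) in *.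
        eapply sle_trans; [|apply fold_elem; apply in_map; apply HL; exact Hs].
        unfold term. destruct (excluded_middle_informative (step a B)) as [_|]; [|contradiction].
        rewrite Hl. apply aeval_mono with (n := S n); [| apply (Hagg _ _ Hs) | pose proof (Hwars _ _ Hs) as W; unfold B in W at 1; cbn [seq_len] in W; rewrite length_map, length_seq in W; exact W].
        intros i Hi. unfold B. rewrite (nth_childseq (fun i => lab (v ++ [i]))) by exact Hi.
        assert (Hd : dom (v ++ [i])). { apply (H2 v i Hv). rewrite En. exact Hi. }
        assert (HR : Rc step (lab (v ++ [i])) a).
        { pose proof (Hsub B i Hs) as X. unfold B in X.
          rewrite (nth_childseq (fun i => lab (v ++ [i]))) in X by exact Hi. exact X. }
        apply (proj2 (IH _ HR)) with (dom := dom); auto. split; auto.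
      + rewrite Hl in Hs. apply Hfb in Hs. contradiction. }
  destruct (HP a0) as [Hm Hb].
  intros Hs. apply Hm. apply le_top_eq. rewrite <- Hs. unfold sem.
  apply ssup_least. intros s [dom [lab [nch [n [HRT [Hl [_ E]]]]]]]. subst s.
  apply (Hb dom lab nch [] n HRT); auto. apply HRT.
Qed.
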